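(* Let $A$ be a normal tensor with bond dimension $D_{\mathbb{1}}$ and injectivity length $L_I$, and let $|\psi\rangle=|\psi_N(A)\rangle$ be the translationally invariant MPS it generates on $N$ sites. Suppose $|\psi\rangle$ has the exact MPS-up$_{0,D}$ property and $N > L_I(\log_2 D + 1)$. Then $|\psi\rangle$ is a product state, $|\psi\rangle = |\phi\rangle^{\otimes N}$ for some $|\phi\rangle\in\mathbb{C}^d$.
   Context: An MPS on $N$ sites with physical dimension $d$ is $|\psi\rangle=\sum_{i_1,\dots,i_N=1}^d \mathrm{Tr}[A^{[1],i_1}\cdots A^{[N],i_N}]|i_1\dots i_N\rangle$, where $A^{[n],i}$ are $D_n\times D_{n+1}$ complex matrices ($D_{N+1}=D_1$); it is translationally invariant (TI), written $|\psi_N(A)\rangle$, if all $A^{[n]}=A$ with $A^i\in\mathcal{M}_{D_{\mathbb{1}}}(\mathbb{C})$. A tensor $A$ is normal if the matrices $\{A^i\}$ have no nontrivial common invariant subspace and the completely positive map $\mathcal{E}(X)=\sum_i A^iX(A^i)^\dagger$ has a unique eigenvalue of largest magnitude, equal to $1$. Blocking $L$ sites gives the tensor with matrices $A^{i_1}\cdots A^{i_L}$ indexed by $(i_1,\dots,i_L)$; a tensor is injective if the map $X\mapsto\sum_{i}\mathrm{Tr}[XA^{i}]|i\rangle$ from $\mathcal{M}_{D_{\mathbb{1}}}(\mathbb{C})$ to the physical space is injective. The injectivity length $L_I$ of a normal tensor is the number of sites after whose blocking the tensor becomes injective (injectivity then persists for larger blocks). A state $|\psi\rangle\in(\mathbb{C}^d)^{\otimes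 N}$ is an MPS-up$_{\varepsilon,D}$ if for every permutation $\pi$ of the $N$ sites, with $U_\pi$ the unitary permuting the tensor factors accordingly, there is an MPS state (open boundary, bond dimensions at most $D$) $|\psi_\pi\rangle$ with $\|U_\pi|\psi\rangle-|\psi_\pi\rangle\|\le\varepsilon$; equivalently, for every bipartition of the sites there is a state $\varepsilon$-close to $|\psi\rangle$ with Schmidt rank at most $D$ across it. Exact MPS-up means $\varepsilon=0$, i.e. Schmidt rank at most $D$ across every bipartition. *)

(* Defs.v *)
From mathcomp Require Import all_boot all_algebra.
From mathcomp Require Import complex.
From mathcomp Require Import reals exp.
Set Implicit Arguments. Unset Strict Implicit. Unset Printing Implicit Defensive.
Import GRing.Theory Num.Theory.
Local Open Scope ring_scope.

(* A tensor with physical dimension d and bond dimension D1: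
   the family of D1 x D1 complex matrices A^i, i < d. *)
Definition tensor (R : realType) (d D1 : nat) := 'I_d -> 'M[R[i]]_D1.

Definition adjmx (R : realType) (n : nat) (M : 'M[R[i]]_n) : 'M[R[i]]_n :=
  (map_mx (fun x : R[i] => x^*) M)^T.

(* A subspace W is encoded (mxalgebra, row convention)
   as the row space of U; A^i W <= W for column vectors means
   U *m (A^i)^T <= U. *)
Definition has_nontrivial_common_invariant_subspace (R : realType) (d D1 : nat)
    (A : tensor R d D1) : Prop :=
  exists U : 'M[R[i]]_D1,
    [/\ (0 < \rank U)%N, (\rank U < D1)%N &
        forall i, (U *m (A i)^T <= U)%MS].

Definition transfer_map (R : realType) (d D1 : nat) (A : tensor R d D1)
    (X : 'M[R[i]]_D1) : 'M[R[i]]_D1 :=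
  \sum_(i < d) (A i *m X *m adjmx (A i)).

Definition is_eigenvalue_of_map (R : realType) (n : nat)
    (E : 'M[R[i]]_n -> 'M[R[i]]_n) (lam : R[i]) : Prop :=
  exists2 X : 'M[R[i]]_n, X != 0 & E X = lam *: X.

Definition unique_largest_eigenvalue_one (R : realType) (n : nat)
    (E : 'M[R[i]]_n -> 'M[R[i]]_n) : Prop :=
  is_eigenvalue_of_map E 1 /\
  forall lam, is_eigenvalue_of_map E lam -> lam != 1 -> `|lam| < 1.

Definition normal_tensor (R : realType) (d D1 : nat) (A : tensor R d D1) : Prop :=
  ~ has_nontrivial_common_invariant_subspace A /\
  unique_largest_eigenvalue_one (transfer_map A).

Definition block_tensor (R : realType) (d D1 : nat) (A : tensor R d D1) (L : nat)
    (c : {ffun 'I_L -> 'I_d}) : 'M[R[i]]_D1 :=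
  \prod_(k < L) A (c k).
Arguments block_tensor {R d D1} A L c.

(* injectivity of X |-> sum_i Tr[X B^i] |i> for a tensor B with index type I *)
Definition injective_tensor (R : realType) (I : finType) (D1 : nat)
    (B : I -> 'M[R[i]]_D1) : Prop :=
  forall X : 'M[R[i]]_D1, (forall c, \tr (X *m B c) = 0) -> X = 0.

Definition injectivity_length (R : realType) (d D1 : nat) (A : tensor R d D1)
    (LI : nat) : Prop :=
  [/\ (0 < LI)%N, injective_tensor (block_tensor A LI) &
      forall L, (0 < L < LI)%N -> ~ injective_tensor (block_tensor A L)].

Definition config (N d : nat) := {ffun 'I_N -> 'I_d}.

Definition ti_mps (R : realType) (d D1 : nat) (A : tensor R d D1) (N : nat)
    (c : config N d) : R[i] :=
  \tr (\prod_(k < N) A (c k)).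
Arguments ti_mps {R d D1} A N c.

Definition merge_config (N d : nat) (S : {set 'I_N}) (a b : config N d) : config N d :=
  [ffun k => if k \in S then a k else b k].

(* Rows and columns are indexed by
   full configurations (enumerated), of which only the restriction to S
   (resp. to the complement) matters; duplicated rows/columns do not change
   the rank, so this is the usual Schmidt rank. *)
Definition schmidt_rank (R : realType) (N d : nat) (psi : config N d -> R[i])
    (S : {set 'I_N}) : nat :=
  \rank (\matrix_(a < #|{: config N d}|, b < #|{: config N d}|)
           psi (merge_config S (enum_val a) (enum_val b))).

Definition exact_MPS_up (R : realType) (N d : nat) (psi : config N d -> R[i])
    (D : nat) : Prop :=
  forall S : {set 'I_N}, (schmidt_rank psi S <= D)%N.

Definition is_product_power (R : realType) (N d : nat) (psi : config N d -> R[i]) : Prop :=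
  exists phi : 'I_d -> R[i], forall c : config N d, psi c = \prod_(k < N) phi (c k).

Definition log2 (R : realType) (x : R) : R := ln x / ln 2.

(* Main.v *)
Require Import Defs.
From mathcomp Require Import all_boot all_algebra.
From mathcomp Require Import complex.
From mathcomp Require Import reals exp.
From mathcomp Require Import boolp order.
From mathcomp Require Import zify ring.
Set Implicit Arguments. Unset Strict Implicit. Unset Printing Implicit Defensive.
Import Order.TTheory GRing.Theory Num.Theory.
Local Open Scope ring_scope.

Section Dual.
Variable R : realType.
Local Notation C := (R[i]).
Variable D1 : nat.
Local Notation Mx := 'M[C]_D1.

Lemma trvec (u : 'rV[C]_(D1 * D1)) (M : Mx) :
  \tr ((vec_mx u)^T *m M) = \sum_j u 0 j * mxvec M 0 j.
Proof.
rewrite (reindex _ (curry_mxvec_bij D1 D1)) /=.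
rewrite (eq_bigr (fun p => u 0 (mxvec_index p.1 p.2) * mxvec M 0 (mxvec_index p.1 p.2))); last by case.
rewrite -(pair_bigA _ (fun a b => u 0 (mxvec_index a b) * mxvec M 0 (mxvec_index a b))) /=.
rewrite /mxtrace [RHS]exchange_big /=; apply: eq_bigr => a _; rewrite !mxE; apply: eq_bigr => b _.
rewrite mxE (mxvecE M b a); congr (_ * _); rewrite -{2}(vec_mxK u); by rewrite (mxvecE (vec_mx u) b a).
Qed.


Lemma dual (I : finType) (B : I -> Mx) : injective_tensor B ->
  forall Z : Mx, exists be : I -> C, Z = \sum_i be i *: B i.
Proof.
move=> injB.
pose W : 'M[C]_(#|I|, D1 * D1) := \matrix_(i, j) mxvec (B (enum_val i)) 0 j.
have full : row_full W.
  rewrite /row_full eqn_leq rank_leq_col /= leqNgt; apply/negP => hlt.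
  have hk : (0 < \rank (kermx W^T))%N by rewrite mxrank_ker mxrank_tr subn_gt0.
  rewrite lt0n mxrank_eq0 in hk.
  have [r hr] : exists r, row r (kermx W^T) != 0.
    apply/existsP; apply: contraR hk => /existsPn h; apply/eqP/row_matrixP => r.
    by rewrite row0; apply/eqP; move: (h r); rewrite negbK.
  set v := row r (kermx W^T) in hr.
  have hv : v *m W^T = 0 by rewrite /v -row_mul mulmx_ker row0.
  have X0 : (vec_mx v)^T = 0.
    apply: injB => c; rewrite trvec.
    transitivity ((v *m W^T) 0 (enum_rank c)); last by rewrite hv mxE.
    rewrite mxE; apply: eq_bigr => j _; by rewrite !mxE enum_rankK.
  move/eqP: hr; apply; apply/eqP; rewrite -vec_mx_eq0; apply/eqP.
  by rewrite -[vec_mx v]trmxK X0 trmx0.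
move=> Z; have /submxP [a ha] := submx_full (mxvec Z) full.
exists (fun i => a 0 (enum_rank i)).
rewrite -[Z]mxvecK ha mulmx_sum_row linear_sum /=.
rewrite (reindex (@enum_val I predT)) /=; last first.
  by apply: onW_bij; apply: enum_val_bij.
apply: eq_bigr => k _; rewrite enum_valK linearZ /=; congr (_ *: _).
have -> : row k W = mxvec (B (enum_val k)) by apply/rowP => j; rewrite !mxE.
by rewrite mxvecK.
Qed.
End Dual.

Section Core.
Variable R : realType.
Local Notation C := (R[i]).
Variables (d D1 N : nat) (A : 'I_d -> 'M[C]_D1).
Local Notation Mx := 'M[C]_D1.
Local Notation cfg := (config N d).

Definition Ax (x : cfg) (k : nat) : Mx :=
  if insub k is Some i then A (x i) else 1.
Definition Psi (B : nat -> Mx) : C := \tr (\prod_(0 <= k < N) B k).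
Definition IP (B : nat -> Mx) s e : Mx := \prod_(s <= k < e) B k.
Definition mergeP (P : pred nat) (B Y : nat -> Mx) k := if P k then B k else Y k.
Definition Rep (P : pred nat) (B : nat -> Mx) :=
  exists p : cfg -> C, forall Y,
    \sum_x p x * Psi (mergeP P (Ax x) Y) = Psi (mergeP P B Y).
Definition upd (J : pred nat) (x x' : cfg) : cfg :=
  [ffun i => if J (val i) then x' i else x i].
Definition Span s e (Z : Mx) :=
  exists al : cfg -> C, Z = \sum_x al x *: IP (Ax x) s e.

Lemma Ax_upd (J : pred nat) x x' k : Ax (upd J x x') k = if J k then Ax x' k else Ax x k.
Proof.
rewrite /Ax; case: insubP => [i _ <-|_]; last by case: (J k).
by rewrite ffunE; case: (J _).
Qed.

Lemma AxE x (i : 'I_N) : Ax x i = A (x i).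
Proof. by rewrite /Ax valK. Qed.

Lemma Psi_split B s e : (s <= e <= N)%N ->
  Psi B = \tr (IP B 0 s * IP B s e * IP B e N).
Proof.
move=> /andP[se eN]; rewrite /Psi /IP.
rewrite (@big_cat_nat _ _ _ s 0 N) ?(leq_trans se eN) //=.
by rewrite (@big_cat_nat _ _ _ e s N) /= ?mulrA.
Qed.

Lemma Rep_Ax (P : pred nat) x : Rep P (Ax x).
Proof.
exists (fun x' => (x' == x)%:R) => Y.
rewrite (bigD1 x) //= eqxx mul1r big1 ?addr0 // => y /negbTE ->.
by rewrite mul0r.
Qed.

Lemma Rep_ext (P : pred nat) (B B' : nat -> Mx) : (forall k, P k -> B k = B' k) -> Rep P B -> Rep P B'.
Proof.
move=> h [p hp]; exists p => Y; rewrite hp; congr Psi.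
by apply: funext => k; rewrite /mergeP; case: ifP => // /h.
Qed.

Lemma Rep_closure (P : pred nat) (B : nat -> Mx) s e (Z : Mx) : (s < e <= N)%N ->
  (forall k, (s <= k < e)%N -> P k) ->
  (forall x', Rep P (fun k => if (s <= k < e)%N then Ax x' k else B k)) ->
  Span s e Z ->
  Rep P (fun k => if (s <= k < e)%N then (if k == s then Z else 1) else B k).
Proof.
move=> /andP[se eN] hP hrep [al ->].
have /choice [p hp] := hrep.
exists (fun x => \sum_x' al x' * p x' x) => Y.
under eq_bigr do rewrite mulr_suml.
rewrite exchange_big /=.
under eq_bigr do (under eq_bigr do rewrite -mulrA; rewrite -mulr_sumr hp).
have sle : (s <= e <= N)%N by rewrite (ltnW se).
under eq_bigr do rewrite (Psi_split _ sle).
rewrite (Psi_split _ sle).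
set M := mergeP P _ Y.
have e1 : forall x' : cfg, IP (mergeP P (fun k => if (s <= k < e)%N then Ax x' k else B k) Y) 0 s = IP M 0 s.
  move=> x'; apply: eq_big_nat => k /andP[_ ks].
  by rewrite /M /mergeP; have -> : (s <= k < e)%N = false by lia.
have e2 : forall x' : cfg, IP (mergeP P (fun k => if (s <= k < e)%N then Ax x' k else B k) Y) e N = IP M e N.
  move=> x'; apply: eq_big_nat => k /andP[ek _].
  by rewrite /M /mergeP; have -> : (s <= k < e)%N = false by lia.
have e3 : forall x' : cfg, IP (mergeP P (fun k => if (s <= k < e)%N then Ax x' k else B k) Y) s e = IP (Ax x') s e.
  move=> x'; apply: eq_big_nat => k hk.
  by rewrite /mergeP hP // hk.
under eq_bigr do rewrite e1 e2 e3.
have -> : IP M s e = \sum_x al x *: IP (Ax x) s e.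
  have hs : (s <= s < e)%N by rewrite leqnn se.
  rewrite /IP big_ltn // {1}/M /mergeP hP // hs eqxx.
  rewrite [X in _ * X = _]big1_seq ?mulr1 // => k /andP[_]; rewrite mem_index_iota => hk.
  rewrite /M /mergeP hP; last by lia.
  have -> : (s <= k < e)%N by lia.
  by have -> : (k == s) = false by lia.
rewrite mulr_sumr mulr_suml raddf_sum /=; apply: eq_bigr => x _.
by rewrite -!mulmxE -scalemxAr -scalemxAl mxtraceZ.
Qed.


Lemma prod_delta m (a b : nat -> 'I_D1) :
  \prod_(0 <= j < m.+1) (delta_mx (a j) (b j) : Mx) =
  (\prod_(0 <= j < m) ((b j == a j.+1)%:R : C)) *: delta_mx (a 0%N) (b m).
Proof.
elim: m => [|m IH]; first by rewrite big_nat1 big_geq // scale1r.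
rewrite big_nat_recr //= IH big_nat_recr //= -mulmxE -scalemxAl.
rewrite mul_delta_mx_cond -scalerA; congr (_ *: _).
by case: eqP => _; rewrite ?mulr1n ?mulr0n ?scale1r ?scale0r.
Qed.


Lemma IP_shift (F : nat -> Mx) s l : IP F s (s + l) = \prod_(k < l) F (s + k)%N.
Proof.
rewrite /IP -{1}(add0n s) big_addn addKn big_mkord.
by apply: eq_bigr => k _; rewrite addnC.
Qed.

Lemma T1 s l (c : {ffun 'I_l -> 'I_d}) (i0 : 'I_d) : (s + l <= N)%N ->
  exists x : cfg, IP (Ax x) s (s + l) = block_tensor A l c.
Proof.
move=> hsl.
exists [ffun i : 'I_N => if insub (val i - s)%N is Some k then
                           (if (s <= val i)%N then c k else i0) else i0].
rewrite IP_shift /block_tensor; apply: eq_bigr => k _.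
have hk : (s + k < N)%N by have := ltn_ord k; lia.
rewrite /Ax insubT /= ffunE /= addKn leq_addr valK.
by [].
Qed.

Lemma T2 s l (x : cfg) (i0N : 'I_N) : (s + l <= N)%N ->
  IP (Ax x) s (s + l) = block_tensor A l [ffun k : 'I_l => x (insubd i0N (s + k)%N)].
Proof.
move=> hsl; rewrite IP_shift /block_tensor; apply: eq_bigr => k _.
have hk : (s + k < N)%N by have := ltn_ord k; lia.
rewrite /Ax insubT /= ffunE; congr (A (x _)); apply: val_inj; rewrite /= val_insubd hk.
by [].
Qed.

Lemma Span1 s e x : Span s e (IP (Ax x) s e).
Proof.
exists (fun x' => (x' == x)%:R).
rewrite (bigD1 x) //= eqxx scale1r big1 ?addr0 // => y /negbTE ->.
by rewrite scale0r.
Qed.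

Lemma Span_sum s e (I : finType) (w : I -> C) (Zs : I -> Mx) :
  (forall i, Span s e (Zs i)) -> Span s e (\sum_i w i *: Zs i).
Proof.
move=> /choice [al hal].
exists (fun x => \sum_i w i * al i x).
under [RHS]eq_bigr do rewrite scaler_suml.
rewrite [RHS]exchange_big /=; apply: eq_bigr => i _.
by rewrite (hal i) scaler_sumr; apply: eq_bigr => x _; rewrite scalerA.
Qed.

Lemma Span_sum0 s e (I : finType) (Zs : I -> Mx) :
  (forall i, Span s e (Zs i)) -> Span s e (\sum_i Zs i).
Proof.
move=> h; have := Span_sum (fun=> 1) h.
by under eq_bigr do rewrite scale1r.
Qed.

Lemma Span_scale s e c Z : Span s e Z -> Span s e (c *: Z).
Proof.
move=> [al ->]; exists (fun x => c * al x).
by rewrite scaler_sumr; apply: eq_bigr => x _; rewrite scalerA.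
Qed.

Lemma Span_mul s e f Z1 Z2 : (s <= e <= f)%N -> Span s e Z1 -> Span e f Z2 ->
  Span s f (Z1 * Z2).
Proof.
move=> /andP[se ef] [a ->] [b ->].
rewrite mulr_suml.
under eq_bigr do rewrite mulr_sumr.
under eq_bigr do under eq_bigr do rewrite -!mulmxE -scalemxAl -scalemxAr scalerA mulmxE.
apply: Span_sum0 => x; apply: Span_sum0 => y; apply: Span_scale.
have -> : IP (Ax x) s e * IP (Ax y) e f = IP (Ax (upd (fun k => (k < e)%N) y x)) s f.
  rewrite /IP (@big_cat_nat _ _ _ e s f) //=; congr (_ * _);
    apply: eq_big_nat => k /andP[h1 h2]; rewrite Ax_upd.
    by rewrite h2.
  by rewrite ltnNge h1.
exact: Span1.
Qed.

Lemma rank_bil (S : {set 'I_N}) (Lam : finType) (p q : Lam -> cfg -> C) :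
  (forall l1 l2, \sum_x \sum_y p l1 x * q l2 y * ti_mps A N (merge_config S x y)
      = (l1 == l2)%:R) ->
  (#|Lam| <= schmidt_rank (ti_mps A N) S)%N.
Proof.
move=> hb; rewrite /schmidt_rank.
set Mm := \matrix_(a, b) _.
pose P : 'M[C]_(#|Lam|, #|{: cfg}|) := \matrix_(i, a) p (enum_val i) (enum_val a).
pose Q : 'M[C]_(#|{: cfg}|, #|Lam|) := \matrix_(b, j) q (enum_val j) (enum_val b).
have h1 : P *m Mm *m Q = 1%:M.
  apply/matrixP => i j; rewrite /P /Q /Mm !mxE.
  under eq_bigr do rewrite !mxE mulr_suml.
  rewrite exchange_big /=.
  transitivity ((enum_val i == enum_val j)%:R : C).
    rewrite -hb.
    rewrite [RHS](reindex (@enum_val _ predT)) /=; last by apply: onW_bij; apply: enum_val_bij.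
    apply: eq_bigr => a _.
    rewrite [RHS](reindex (@enum_val _ predT)) /=; last by apply: onW_bij; apply: enum_val_bij.
    apply: eq_bigr => b _.
    by rewrite !mxE mulrAC.
  by rewrite (inj_eq enum_val_inj).
have := mxrank1 C #|Lam|; rewrite -h1 => <-.
apply: leq_trans (mxrankM_maxl _ _) _.
exact: mxrankM_maxr.
Qed.

Variable L : nat.
Hypothesis L0 : (0 < L)%N.

Definition blk (G : nat -> Mx) k : Mx := if (k %% L == 0)%N then G (k %/ L)%N else 1.

Lemma blk_in t k : (t * L <= k < t.+1 * L)%N -> (k %/ L = t)%N /\ (k %% L = k - t * L)%N.
Proof.
move=> hk; have -> : k = (t * L + (k - t * L))%N by lia.
have hlt : (k - t * L < L)%N by rewrite mulSn in hk; lia.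
rewrite divnMDl // modnMDl divn_small // modn_small // addn0; split=> //; lia.
Qed.

Lemma blk_eq (G : nat -> Mx) t k : (t * L <= k < t.+1 * L)%N ->
  blk G k = if k == (t * L)%N then G t else 1.
Proof.
move=> hk; have [h1 h2] := blk_in hk; rewrite /blk h1 h2.
have -> : ((k - t * L)%N == 0%N) = (k == t * L)%N by lia.
by [].
Qed.

Lemma IP_blocks (G : nat -> Mx) m : IP (blk G) 0 (m * L) = \prod_(0 <= j < m) G j.
Proof.
elim: m => [|m IH]; first by rewrite mul0n /IP !big_geq.
rewrite /IP (@big_cat_nat _ _ _ (m * L)) //=; last by rewrite leq_mul2r leqnSn orbT.
rewrite -/(IP _ _ _) IH big_nat_recr //=; congr (_ * _).
have h : (m * L < m.+1 * L)%N by rewrite mulSn; lia.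
rewrite big_ltn // (@blk_eq G m) ?eqxx; last by rewrite leqnn h.
rewrite big1_seq ?mulr1 // => k /andP[_]; rewrite mem_index_iota => hk.
rewrite (@blk_eq G m); last by lia.
by have -> : (k == m * L)%N = false by lia.
Qed.

Lemma blocks_rep (P : pred nat) (Pb : nat -> bool) m (G : nat -> Mx)
    (base : cfg -> nat -> Mx) :
  (m * L <= N)%N ->
  (forall x, Rep P (base x)) ->
  (forall t x x', (t < m)%N ->
     base (upd (fun k => (t * L <= k < t.+1 * L)%N) x x') =
     (fun k => if (t * L <= k < t.+1 * L)%N then Ax x' k else base x k)) ->
  (forall t k, (t < m)%N -> (t * L <= k < t.+1 * L)%N -> P k = Pb t) ->
  (forall t, (t < m)%N -> Pb t -> Span (t * L) (t.+1 * L) (G t)) ->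
  forall x, Rep P (fun k => if (k < m * L)%N then blk G k else base x k).
Proof.
move=> mLN hbase hupd hP hG.
suff : forall t, (t <= m)%N -> forall x,
    Rep P (fun k => if (k < t * L)%N then blk G k else base x k) by apply.
elim=> [|t IH] tm x.
  by apply: Rep_ext (hbase x) => k _; rewrite mul0n ltn0.
have tm' : (t < m)%N by [].
case hb : (Pb t).
  have tLN : (t.+1 * L <= N)%N by apply: leq_trans mLN; rewrite leq_mul2r tm orbT.
  have := @Rep_closure P (fun k => if (k < t * L)%N then blk G k else base x k)
    (t * L) (t.+1 * L) (G t).
  have h1 : (t * L < t.+1 * L <= N)%N by rewrite tLN andbT mulSn; lia.
  move=> /(_ h1) H.
  have /H {H} H : forall k, (t * L <= k < t.+1 * L)%N -> P k by move=> k hk; rewrite (hP t) //.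
  have /H {H} H : forall x', Rep P (fun k => if (t * L <= k < t.+1 * L)%N then Ax x' k
      else if (k < t * L)%N then blk G k else base x k).
    move=> x'; apply: Rep_ext (IH (ltnW tm) (upd (fun k => (t * L <= k < t.+1 * L)%N) x x')).
    move=> k _; rewrite hupd //.
    by case: ifP => //; case: ifP => // h h'; lia.
  apply: Rep_ext (H (hG t tm' hb)) => k _.
  case: ifP => hk.
    have -> : (k < t.+1 * L)%N by lia.
    by rewrite (blk_eq G hk).
  case: ifP => hk2.
    by have -> : (k < t.+1 * L)%N by lia.
  by have -> : (k < t.+1 * L)%N = false by lia.
apply: Rep_ext (IH (ltnW tm) x) => k hPk.
case: ifP => hk; first by have -> : (k < t.+1 * L)%N by lia.
case: ifP => hk2 //.
by rewrite (hP t k) // ?hb in hPk; lia.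
Qed.

Lemma tr_delta_mul (y x : 'I_D1) (Z : Mx) : \tr (delta_mx y x *m Z) = Z x y.
Proof.
rewrite /mxtrace (bigD1 y) //= big1 ?addr0.
  rewrite mxE (bigD1 x) //= !mxE !eqxx mul1r big1 ?addr0 // => t nt.
  by rewrite !mxE (negbTE nt) andbF mul0r.
move=> l nl; rewrite mxE big1 // => t _.
by rewrite !mxE (negbTE nl) mul0r.
Qed.

Lemma tr_mul_sum (G Z : Mx) : \tr (G *m Z) = \sum_x \sum_y G y x * Z x y.
Proof.
rewrite /mxtrace exchange_big /=; apply: eq_bigr => y _.
by rewrite mxE.
Qed.

Lemma ti_Psi (P : pred nat) (S : {set 'I_N}) x y :
  (forall i : 'I_N, (i \in S) = P i) ->
  ti_mps A N (merge_config S x y) = Psi (mergeP P (Ax x) (Ax y)).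
Proof.
move=> hS; rewrite /ti_mps /Psi big_mkord; congr (\tr _); apply: eq_bigr => i _.
by rewrite /mergeP !AxE ffunE hS; case: (P i).
Qed.

Lemma mergeP_C (P : pred nat) B Y : mergeP (predC P) B Y = mergeP P Y B.
Proof. by apply: funext => k; rewrite /mergeP /=; case: (P k). Qed.

Definition lk (i0 : 'I_D1) n (f : {ffun 'I_n -> 'I_D1}) (c : nat) : 'I_D1 :=
  if insub c.-1 is Some j then f j else i0.

Definition inS m k := ((k %/ L)%N < m)%N && ~~ odd (k %/ L)%N.

Lemma prod_eq_ffun n (f g : {ffun 'I_n -> 'I_D1}) :
  \prod_(j < n) ((f j == g j)%:R : C) = (f == g)%:R.
Proof.
case: eqP => [->|/eqP hne]; first by rewrite big1 // => j _; rewrite eqxx.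
have [j hj] : exists j, f j != g j.
  apply/existsP; apply: contraR hne => /existsPn h; apply/eqP/ffunP => j.
  by apply/eqP; move: (h j); rewrite negbK.
by rewrite (bigD1 j) //= (negbTE hj) mul0r.
Qed.

Lemma layout (i0 : 'I_D1) (x0 : cfg) m (K : finType) (g : K -> Mx) (Zc : K -> nat -> Mx) :
  odd m -> (m * L <= N)%N ->
  (forall b x, Rep (predC (inS m)) (fun k => if (k < m * L)%N then Ax x k else Zc b k)) ->
  (forall a b, \tr (g a *m IP (Zc b) (m * L) N) = (a == b)%:R) ->
  (forall t, (t < m)%N -> forall Z, Span (t * L) (t.+1 * L) Z) ->
  (D1 ^ m.-1 * #|K| <= schmidt_rank (ti_mps A N) [set i : 'I_N | inS m i])%N.
Proof.
move=> modd mLN hZrep hg hfull.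
set n := m.-1.
have m0 : (0 < m)%N by move: modd; case: (m).
have mn : m = n.+1 by rewrite /n prednK.
pose beta (lam : {ffun 'I_n -> 'I_D1}) (x y : 'I_D1) (c : nat) :=
  if c == 0%N then y else if c == m then x else lk i0 lam c.
pose Grow lam x y j := (delta_mx (beta lam x y j) (beta lam x y j.+1) : Mx).
pose Gcol (mu : {ffun 'I_n -> 'I_D1}) j := (delta_mx (lk i0 mu j) (lk i0 mu j.+1) : Mx).
have hblk : forall t k, (t < m)%N -> (t * L <= k < t.+1 * L)%N -> (k %/ L)%N = t.
  by move=> t k _ hk; case: (blk_in hk).
have hrow : forall lxy : {ffun 'I_n -> 'I_D1} * 'I_D1 * 'I_D1, exists p : cfg -> C,
    forall Y, \sum_x p x * Psi (mergeP (inS m) (Ax x) Y) =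
      Psi (mergeP (inS m) (fun k => if (k < m * L)%N then blk (Grow lxy.1.1 lxy.1.2 lxy.2) k
                                    else Ax x0 k) Y).
  move=> [[lam x] y].
  apply: (@blocks_rep (inS m) (fun t => ~~ odd t) m _ Ax mLN).
  - by move=> z; apply: Rep_Ax.
  - by move=> t z z' _; apply: funext => k; rewrite Ax_upd.
  - by move=> t k tm hk; rewrite /inS (hblk t k tm hk) tm.
  - by move=> t tm _; apply: hfull.
have /choice [pr hpr] := hrow.
have hcol : forall mb : {ffun 'I_n -> 'I_D1} * K, exists q : cfg -> C,
    forall X, \sum_y q y * Psi (mergeP (inS m) X (Ax y)) =
      Psi (mergeP (inS m) X (fun k => if (k < m * L)%N then blk (Gcol mb.1) k
                                    else Zc mb.2 k)).
  move=> [mu b].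
  have := (@blocks_rep (predC (inS m)) odd m (Gcol mu)
             (fun x k => if (k < m * L)%N then Ax x k else Zc b k) mLN).
  move=> /(_ (hZrep b)) H.
  have /H {H} H : forall t x x', (t < m)%N ->
     (fun k => if (k < m * L)%N then Ax (upd (fun k => (t * L <= k < t.+1 * L)%N) x x') k else Zc b k) =
     (fun k => if (t * L <= k < t.+1 * L)%N then Ax x' k else if (k < m * L)%N then Ax x k else Zc b k).
    move=> t x x' tm; apply: funext => k; rewrite Ax_upd.
    case: ifP => hk; case: ifP => // hk2.
    have : (t.+1 * L <= m * L)%N by rewrite leq_mul2r tm orbT.
    lia.
  have /H {H} H : forall t k, (t < m)%N -> (t * L <= k < t.+1 * L)%N -> (predC (inS m)) k = odd t.
    by move=> t k tm hk; rewrite /= /inS (hblk t k tm hk) tm /= negbK.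
  have /H {H} H : forall t, (t < m)%N -> odd t -> Span (t * L) (t.+1 * L) (Gcol mu t).
    by move=> t tm _; apply: hfull.
  have [q hq] := H x0.
  exists q => X.
  transitivity (\sum_y q y * Psi (mergeP (predC (inS m)) (Ax y) X)).
    by apply: eq_bigr => y _; rewrite mergeP_C.
  rewrite hq mergeP_C; congr Psi; apply: funext => k; rewrite /mergeP.
  by case: (inS m k) => //; case: (k < m * L)%N.
have /choice [qc hqc] := hcol.
pose p (la : {ffun 'I_n -> 'I_D1} * K) (X : cfg) :=
  \sum_x \sum_y g la.2 y x * pr (la.1, x, y) X.
pose q (mb : {ffun 'I_n -> 'I_D1} * K) (Y : cfg) := qc mb Y.
have hS : forall i : 'I_N, (i \in [set i : 'I_N | inS m i]) = inS m i by move=> i; rewrite inE.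
have := @rank_bil [set i : 'I_N | inS m i] ({ffun 'I_n -> 'I_D1} * K)%type p q.
rewrite card_prod card_ffun !card_ord; apply.
move=> [lam a] [mu b].
under eq_bigr do under eq_bigr do rewrite (ti_Psi _ _ hS) -mulrA.
under eq_bigr do rewrite -mulr_sumr hqc /=.
set Bcol := (fun k : nat => if (k < m * L)%N then blk (Gcol mu) k else Zc b k).
have hval : forall x y, Psi (mergeP (inS m) (fun k => if (k < m * L)%N then
      blk (Grow lam x y) k else Ax x0 k) Bcol) = (lam == mu)%:R * IP (Zc b) (m * L) N x y.
  move=> x y.
  rewrite (@Psi_split _ (m * L) (m * L)) ?leqnn ?mLN // [IP _ (m * L) (m * L)]/IP big_geq // mulr1.
  pose Gm j := if odd j then Gcol mu j else Grow lam x y j.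
  have e1 : IP (mergeP (inS m) (fun k => if (k < m * L)%N then
      blk (Grow lam x y) k else Ax x0 k) Bcol) 0 (m * L) = IP (blk Gm) 0 (m * L).
    apply: eq_big_nat => k /andP[_ hk].
    have hkL : (k %/ L < m)%N by rewrite ltn_divLR.
    rewrite /mergeP /inS hkL /Bcol /= hk /blk /Gm.
    by case: (odd _); case: ifP.
  have e2 : IP (mergeP (inS m) (fun k => if (k < m * L)%N then
      blk (Grow lam x y) k else Ax x0 k) Bcol) (m * L) N = IP (Zc b) (m * L) N.
    apply: eq_big_nat => k /andP[hk _].
    have hkL : (k %/ L < m)%N = false by rewrite ltn_divLR // ltnNge hk.
    by rewrite /mergeP /inS hkL /Bcol /= ltnNge hk.
  rewrite e1 e2 IP_blocks.
  pose a' j := if odd j then lk i0 mu j else beta lam x y j.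
  pose b' j := if odd j then lk i0 mu j.+1 else beta lam x y j.+1.
  have e3 : \prod_(0 <= j < m) Gm j = \prod_(0 <= j < n.+1) (delta_mx (a' j) (b' j) : Mx).
    by rewrite mn; apply: eq_big_nat => j _; rewrite /Gm /a' /b'; case: (odd j).
  rewrite e3 prod_delta.
  have hn : odd n = false by move: modd; rewrite mn /= => /negbTE.
  have ha0 : a' 0%N = y by [].
  have hbn : b' n = x by rewrite /b' hn /beta mn eqxx.
  rewrite ha0 hbn.
  have e4 : \prod_(0 <= j < n) ((b' j == a' j.+1)%:R : C) = (lam == mu)%:R.
    rewrite -prod_eq_ffun big_mkord; apply: eq_bigr => j _.
    have hj1 : (j.+1 == 0%N) = false by [].
    have hj2 : (j.+1 == m) = false by rewrite mn eqSS; apply/negbTE; rewrite neq_ltn ltn_ord.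
    have el : lk i0 lam j.+1 = lam j by rewrite /lk /= valK.
    have em : lk i0 mu j.+1 = mu j by rewrite /lk /= valK.
    rewrite /b' /a' /beta /= ?hj1 ?hj2 el em.
    by case: (odd j) => /=; rewrite // eq_sym.
  by rewrite e4 -mulmxE -scalemxAl mxtraceZ tr_delta_mul.
transitivity (\sum_x \sum_y g a y x *
   \sum_X pr (lam, x, y) X * Psi (mergeP (inS m) (Ax X) Bcol)).
  rewrite /p /=.
  under eq_bigr do (rewrite mulr_suml; under eq_bigr do rewrite mulr_suml).
  rewrite exchange_big; apply: eq_bigr => x _.
  rewrite exchange_big; apply: eq_bigr => y _.
  by rewrite mulr_sumr; apply: eq_bigr => X _; rewrite mulrA.
under eq_bigr => x _ do under eq_bigr => y _ do rewrite (hpr (lam, x, y)) /= hval.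
transitivity ((lam == mu)%:R * \tr (g a *m IP (Zc b) (m * L) N)).
  rewrite tr_mul_sum mulr_sumr; apply: eq_bigr => x _.
  by rewrite mulr_sumr; apply: eq_bigr => y _; rewrite mulrCA.
rewrite hg xpair_eqE.
by case: (lam == mu); case: (a == b); rewrite /= ?mulr1 ?mul1r ?mulr0 ?mul0r.
Qed.

Lemma full_inj s l (i0 : 'I_d) : (s + l <= N)%N -> injective_tensor (block_tensor A l) ->
  forall Z, Span s (s + l) Z.
Proof.
move=> hsl inj Z; have [be ->] := dual inj Z.
have /choice [xc hxc] : forall c, exists x, IP (Ax x) s (s + l) = block_tensor A l c.
  by move=> c; apply: T1.
have -> : \sum_c be c *: block_tensor A l c = \sum_c be c *: IP (Ax (xc c)) s (s + l).
  by apply: eq_bigr => c _; rewrite hxc.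
by apply: Span_sum => c; apply: Span1.
Qed.

Lemma inj_tr s l (i0 : 'I_d) : (s + l <= N)%N -> injective_tensor (block_tensor A l) ->
  forall Y : Mx, (forall x, \tr (Y *m IP (Ax x) s (s + l)) = 0) -> Y = 0.
Proof.
move=> hsl inj Y hY; apply: inj => c; have [x hx] := T1 c i0 hsl.
by rewrite -hx hY.
Qed.

Lemma noninj_tr s l (i0N : 'I_N) : (s + l <= N)%N -> ~ injective_tensor (block_tensor A l) ->
  exists2 X : Mx, X != 0 & forall x, \tr (X *m IP (Ax x) s (s + l)) = 0.
Proof.
move=> hsl ninj.
case: (pselect (exists2 X : Mx, X != 0 & forall c, \tr (X *m block_tensor A l c) = 0)).
  by move=> [X hX hc]; exists X => // x; rewrite (T2 x i0N hsl); apply: hc.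
move=> hno; exfalso; apply: ninj => X hX; case: (X =P 0) => // /eqP hX0.
by exfalso; apply: hno; exists X.
Qed.

Lemma full_long s r l (i0 : 'I_d) : (s + r + l <= N)%N -> (r <= l)%N ->
  injective_tensor (block_tensor A l) -> forall Z, Span s (s + r + l) Z.
Proof.
move=> hN hr inj Z.
have [al hal] := full_inj i0 hN inj 1.
have -> : Z = Z * 1 by rewrite mulr1.
rewrite hal mulr_sumr; apply: Span_sum0 => x.
rewrite -mulmxE -scalemxAr; apply: Span_scale.
have -> : IP (Ax x) (s + r) (s + r + l) = IP (Ax x) (s + r) (s + l) * IP (Ax x) (s + l) (s + r + l).
  by rewrite /IP (@big_cat_nat _ _ _ (s + l)) //=; lia.
rewrite mulmxE mulrA.
apply: (@Span_mul s (s + l)); first by lia.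
  have hsl : (s + l <= N)%N by lia.
  exact: full_inj i0 hsl inj _.
exact: Span1.
Qed.

Lemma hfull_blocks (i0 : 'I_d) m : (m * L <= N)%N -> injective_tensor (block_tensor A L) ->
  forall t, (t < m)%N -> forall Z, Span (t * L) (t.+1 * L) Z.
Proof.
move=> mLN inj t tm Z; rewrite mulSnr.
apply: full_inj i0 _ inj Z.
by apply: leq_trans mLN; rewrite -mulSnr leq_mul2r tm orbT.
Qed.

Lemma caseA (i0 : 'I_d) (iD : 'I_D1) (x0 : cfg) m : odd m -> (m * L)%N = N ->
  injective_tensor (block_tensor A L) ->
  (D1 ^ m.-1 <= schmidt_rank (ti_mps A N) [set i : 'I_N | inS m i])%N.
Proof.
move=> modd mLN inj.
have h1 : (m * L <= N)%N by rewrite mLN.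
have h2 : forall (b : unit) x, Rep (predC (inS m)) (fun k => if (k < m * L)%N then Ax x k else 1).
  move=> b x; apply: Rep_ext (Rep_Ax _ x) => k _.
  case: ifP => // hk; rewrite /Ax; case: insubP => // i _ hi; exfalso.
  by move: (ltn_ord i); rewrite hi -mLN hk.
have h3 : forall a b : unit, \tr (delta_mx iD iD *m IP (fun=> 1) (m * L)%N N) = (a == b)%:R.
  by move=> [] []; rewrite mLN /IP big_geq // tr_delta_mul mxE !eqxx.
have := @layout iD x0 m unit (fun=> delta_mx iD iD) (fun _ _ => 1) modd h1 h2 h3
  (hfull_blocks i0 h1 inj).
by rewrite card_unit muln1.
Qed.

Lemma caseC (i0 : 'I_d) (iD : 'I_D1) (x0 : cfg) m r : odd m -> (m * L + r + L)%N = N ->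
  (r <= L)%N -> injective_tensor (block_tensor A L) ->
  (D1 ^ m.-1 * (D1 * D1) <= schmidt_rank (ti_mps A N) [set i : 'I_N | inS m i])%N.
Proof.
move=> modd hN hr inj.
have mLN : (m * L < N)%N by rewrite -hN; lia.
have h1 := ltnW mLN.
pose Zc (xy : 'I_D1 * 'I_D1) k : Mx := if k == (m * L)%N then delta_mx xy.1 xy.2 else 1.
have h2 : forall b x, Rep (predC (inS m)) (fun k => if (k < m * L)%N then Ax x k else Zc b k).
  move=> [x' y'] x.
  have := @Rep_closure (predC (inS m)) (Ax x) (m * L) N (delta_mx x' y').
  rewrite mLN leqnn => /(_ isT) H.
  have /H {H} H : forall k, (m * L <= k < N)%N -> predC (inS m) k.
    move=> k /andP[hk _]; rewrite /= /inS.
    by have -> : (k %/ L < m)%N = false by rewrite ltn_divLR // ltnNge hk.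
  have /H {H} H : forall x', Rep (predC (inS m)) (fun k => if (m * L <= k < N)%N then Ax x' k else Ax x k).
    move=> z; apply: Rep_ext (Rep_Ax _ (upd (fun k => (m * L <= k < N)%N) x z)) => k _.
    by rewrite Ax_upd.
  have /H {H} H : Span (m * L) N (delta_mx x' y').
    have hsp := @full_long (m * L) r L i0 (eq_leq hN) hr inj (delta_mx x' y').
    by rewrite hN in hsp.
  apply: Rep_ext H => k _ /=; rewrite /Zc /=.
  case: ifP => hk.
    have -> : (k < m * L)%N = false by lia.
    by [].
  case: ifP => hk2 //.
  have -> : (k == m * L)%N = false by lia.
  rewrite /Ax; case: insubP => // i _ hi; exfalso.
  by move: (ltn_ord i); rewrite hi; lia.
have h3 : forall a b, \tr ((fun xy : 'I_D1 * 'I_D1 => delta_mx xy.2 xy.1) a *m IP (Zc b) (m * L)%N N) = (a == b)%:R.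
  move=> [x y] [x' y'] /=.
  rewrite /IP big_ltn // /Zc eqxx big1_seq ?mulr1 ?tr_delta_mul ?mxE ?xpair_eqE.
    by [].
  move=> k /andP[_]; rewrite mem_index_iota => hk.
  by have -> : (k == m * L)%N = false by lia.
have := @layout iD x0 m ('I_D1 * 'I_D1)%type _ Zc modd h1 h2 h3 (hfull_blocks i0 h1 inj).
by rewrite card_prod !card_ord.
Qed.


Lemma caseB (i0 : 'I_d) (iD : 'I_D1) (x0 x1 x2 : cfg) m (i1 j1 i2 j2 : 'I_D1) :
  odd m -> (m * L <= N)%N -> injective_tensor (block_tensor A L) ->
  IP (Ax x1) (m * L)%N N i1 j1 * IP (Ax x2) (m * L)%N N i2 j2 -
    IP (Ax x2) (m * L)%N N i1 j1 * IP (Ax x1) (m * L)%N N i2 j2 != 0 ->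
  (D1 ^ m.-1 * 2 <= schmidt_rank (ti_mps A N) [set i : 'I_N | inS m i])%N.
Proof.
move=> modd mLN inj.
set W1 := IP (Ax x1) _ N; set W2 := IP (Ax x2) _ N => hdel.
set del := W1 i1 j1 * W2 i2 j2 - W2 i1 j1 * W1 i2 j2 in hdel.
pose g (a : bool) : Mx := if a then
    (W2 i2 j2 / del) *: delta_mx j1 i1 - (W2 i1 j1 / del) *: delta_mx j2 i2
  else (W1 i1 j1 / del) *: delta_mx j2 i2 - (W1 i2 j2 / del) *: delta_mx j1 i1.
pose Zc (b : bool) := Ax (if b then x1 else x2).
have h2 : forall b x, Rep (predC (inS m)) (fun k => if (k < m * L)%N then Ax x k else Zc b k).
  move=> b x; apply: Rep_ext (Rep_Ax _ (upd (fun k => (m * L <= k)%N) x (if b then x1 else x2))) => k _.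
  by rewrite Ax_upd /Zc; case: (leqP (m * L) k).
have htr : forall (Z : Mx) (a b : C) (ia ja ib jb : 'I_D1),
    \tr ((a *: delta_mx ja ia - b *: delta_mx jb ib) *m Z) = a * Z ia ja - b * Z ib jb.
  by move=> Z a b ia ja ib jb; rewrite mulmxBl raddfB /= -!scalemxAl !mxtraceZ !tr_delta_mul.
have h3 : forall a b, \tr (g a *m IP (Zc b) (m * L)%N N) = (a == b)%:R.
  move=> [] [] /=; rewrite htr -/W1 -/W2 /=; rewrite /del in hdel *.
  - by field.
  - by field.
  - by field.
  - by field.
have := @layout iD x0 m bool g Zc modd mLN h2 h3 (hfull_blocks i0 mLN inj).
by rewrite card_bool.
Qed.

Lemma short_two (i0 : 'I_d) (iN : 'I_N) m r : (0 < m)%N -> (m * L + r)%N = N ->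
  (0 < r < L)%N -> injective_tensor (block_tensor A L) ->
  ~ injective_tensor (block_tensor A (L - r)) ->
  exists (x1 x2 : cfg) (i1 j1 i2 j2 : 'I_D1),
  IP (Ax x1) (m * L)%N N i1 j1 * IP (Ax x2) (m * L)%N N i2 j2 -
    IP (Ax x2) (m * L)%N N i1 j1 * IP (Ax x1) (m * L)%N N i2 j2 != 0.
Proof.
move=> m0 hN hr inj ninj.
set W := fun x => IP (Ax x) (m * L)%N N.
case: (pselect (exists (x1 x2 : cfg) (i1 j1 i2 j2 : 'I_D1),
  W x1 i1 j1 * W x2 i2 j2 - W x2 i1 j1 * W x1 i2 j2 != 0)) => // hno; exfalso.
have hz : forall x1 x2 i1 j1 i2 j2, W x1 i1 j1 * W x2 i2 j2 = W x2 i1 j1 * W x1 i2 j2.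
  move=> x1 x2 i1 j1 i2 j2; apply/eqP; rewrite -subr_eq0.
  case: eqP => // /eqP h; exfalso; apply: hno.
  by exists x1, x2, i1, j1, i2, j2.
have [M hM] : exists M : Mx, forall x, exists c : C, W x = c *: M.
  case: (pselect (exists x i j, W x i j != 0)) => [[x1 [i1 [j1 h1]]]|hall].
    exists (W x1) => x; exists (W x i1 j1 / W x1 i1 j1); apply/matrixP => i2 j2.
    rewrite mxE -[W x i2 j2](mulKf h1) (hz x1 x i1 j1 i2 j2).
    by field.
  exists 0 => x; exists 0; rewrite scale0r; apply/matrixP => i j; rewrite mxE.
  apply/eqP; case: eqP => // /eqP hne; exfalso; apply: hall.
  by exists x, i, j.
have /choice [c hc] := hM.
set s0 := (N - L)%N.
have hLm : (L <= m * L)%N by rewrite leq_pmull.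
have e1 : (s0 + (L - r))%N = (m * L)%N by rewrite /s0; lia.
have e2 : (s0 + L)%N = N by rewrite /s0; lia.
have hinj := @inj_tr s0 L i0 (eq_leq e2) inj.
have hle : (s0 + (L - r) <= N)%N by rewrite e1 -hN leq_addr.
have [X hX0 hX] := @noninj_tr s0 (L - r) iN hle ninj.
have hsplit : forall x, IP (Ax x) s0 (s0 + L)%N = IP (Ax x) s0 (s0 + (L - r))%N * W x.
  move=> x; rewrite /W e1 e2 /IP (@big_cat_nat _ _ _ (m * L)%N) //.
    by rewrite -e1 leq_addr.
  by rewrite -hN leq_addr.
case hMu : (M \in unitmx).
  have Y0 : invmx M *m X = 0.
    apply: hinj => x; rewrite hsplit hc -!mulmxE -!scalemxAr mxtraceZ.
    by rewrite !mulmxA mxtrace_mulC !mulmxA mulmxV // mul1mx hX mulr0.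
  move/eqP: hX0; apply.
  by rewrite -(mulKVmx hMu X) Y0 mulmx0.
have Y0 : (kermx M^T)^T = 0.
  apply: hinj => x; rewrite hsplit hc -!mulmxE -!scalemxAr mxtraceZ.
  rewrite !mulmxA mxtrace_mulC !mulmxA.
  have -> : M *m (kermx M^T)^T = 0.
    by rewrite -{1}[M]trmxK -trmx_mul mulmx_ker trmx0.
  by rewrite !mul0mx /mxtrace big1 ?mulr0 // => i _; rewrite mxE.
have : (0 < \rank (kermx M^T))%N.
  rewrite mxrank_ker mxrank_tr subn_gt0 ltn_neqAle rank_leq_row andbT.
  by move: hMu; rewrite -row_free_unit /row_free => ->.
by rewrite -mxrank_tr Y0 mxrank0.
Qed.

Lemma pow2_le k : (2 <= D1)%N -> (2 ^ k <= D1 ^ k)%N.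
Proof. by move=> h; elim: k => // k IH; rewrite !expnS leq_mul. Qed.

Lemma combo (i0 : 'I_d) (iN : 'I_N) (iD : 'I_D1) (x0 : cfg) (D : nat) :
  injective_tensor (block_tensor A L) ->
  (forall l, (0 < l < L)%N -> ~ injective_tensor (block_tensor A l)) ->
  (2 <= D1)%N -> (L < N)%N -> (D ^ L < 2 ^ (N - L))%N ->
  exists S, (D < schmidt_rank (ti_mps A N) S)%N.
Proof.
move=> inj minl hD1 hLN hD.
set q := (N %/ L)%N; set r := (N %% L)%N.
have hN : N = (q * L + r)%N by rewrite /q /r -divn_eq.
have hr : (r < L)%N by rewrite /r ltn_pmod.
have hq : (0 < q)%N by rewrite /q divn_gt0 // ltnW.
have [q' eq'] : exists q', q = q'.+1 by exists q.-1; rewrite prednK.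
have hDq : (D < 2 ^ q)%N.
  rewrite -(@ltn_exp2r _ _ L) // -expnM.
  apply: leq_trans hD _; rewrite leq_exp2l // mulnC.
  rewrite hN eq' mulSn; lia.
have hDq0 : r = 0%N -> (D < 2 ^ q')%N.
  move=> r0; rewrite -(@ltn_exp2r _ _ L) // -expnM.
  have -> : (q' * L)%N = (N - L)%N by rewrite hN eq' r0 mulSn; lia.
  by [].
case hodd : (odd q).
  case: (posnP r) => [r0|rpos].
    exists [set i : 'I_N | inS q i].
    apply: leq_trans (caseA i0 iD x0 hodd _ inj); last by rewrite hN r0 addn0.
    apply: leq_trans (hDq0 r0) _; rewrite eq' /=; exact: pow2_le.
  have hrL : (0 < L - r < L)%N by lia.
  have [x1 [x2 [i1 [j1 [i2 [j2 hdel]]]]]] :=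
    short_two i0 iN hq (esym hN) (introT andP (conj rpos hr)) inj (minl _ hrL).
  exists [set i : 'I_N | inS q i].
  apply: leq_trans (caseB i0 iD x0 hodd _ inj hdel); last by rewrite hN leq_addr.
  apply: leq_trans hDq _; rewrite eq' expnSr /= leq_mul2r /=; exact: pow2_le.
have hq'odd : odd q' by move: hodd; rewrite eq' /= => /negbFE.
exists [set i : 'I_N | inS q' i].
have hN' : (q' * L + r + L)%N = N by rewrite hN eq' mulSn; lia.
apply: leq_trans (caseC i0 iD x0 hq'odd hN' (ltnW hr) inj).
apply: leq_trans hDq _.
have -> : (D1 ^ q'.-1 * (D1 * D1) = D1 ^ q)%N.
  by rewrite eq'; case: (q') hq'odd => // n _; rewrite /= !expnS; ring.
exact: pow2_le.
Qed.
End Core.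

Lemma real_to_nat (R : realType) (LI N D : nat) : (0 < LI)%N -> (0 < D)%N ->
  (N%:R : R) > LI%:R * (log2 (D%:R : R) + 1) ->
  (LI < N)%N /\ (D ^ LI < 2 ^ (N - LI))%N.
Proof.
move=> LI0 D0 h.
have ln2 : 0 < ln (2 : R) by apply: ln_gt0; rewrite ltr1n.
have lnD : 0 <= ln (D%:R : R) by apply: ln_ge0; rewrite ler1n.
have lg : 0 <= log2 (D%:R : R) by rewrite /log2 divr_ge0 // ltW.
have hLN : (LI < N)%N.
  rewrite -(ltr_nat R); apply: le_lt_trans h.
  by rewrite -{1}[LI%:R]mulr1 ler_wpM2l // lerDr.
split=> //.
rewrite -(ltr_nat R) -(ltr_ln (R := R)); last 2 first.
- by rewrite posrE ltr0n expn_gt0 D0.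
- by rewrite posrE ltr0n expn_gt0.
have hD : 0 < (D%:R : R) by rewrite ltr0n.
have h2 : 0 < (2%:R : R) by rewrite ltr0n.
rewrite !natrX (lnXn _ hD) (lnXn (N - LI)%N h2) -[ln (D%:R) *+ LI]mulr_natr -[ln 2 *+ _]mulr_natr (natrB _ (ltnW hLN)).
move: h; rewrite mulrDr mulr1 -ltrBrDr /log2 mulrA ltr_pdivrMr // => h.
by rewrite mulrC [ln 2 * _]mulrC.
Qed.

Lemma prod11 (R : realType) (n : nat) (F : 'I_n -> 'M[R[i]]_1) :
  \prod_(k < n) F k = (\prod_(k < n) F k 0 0)%:M.
Proof.
elim/big_rec2: _ => [|k y1 y2 _ ->]; first by [].
by rewrite {1}[F k]mx11_scalar -mulmxE -scalar_mxM.
Qed.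

Theorem proposition1 (R : realType) (d D1 : nat) (A : tensor R d D1)
    (LI N D : nat) :
  normal_tensor A ->
  injectivity_length A LI ->
  (0 < D)%N ->
  exact_MPS_up (ti_mps A N) D ->
  (N%:R : R) > LI%:R * (log2 (D%:R : R) + 1) ->
  is_product_power (ti_mps A N).
Proof.
move=> [_ [[X hX _] _]] [LI0 inj minl] D0 hup hreal.
have [hLN hDpow] := real_to_nat LI0 D0 hreal.
have N0 : (0 < N)%N by apply: leq_ltn_trans hLN.
case: d A X hX inj minl hup => [|d'] A X hX inj minl hup.
  by exists (fun=> 0) => c; case: (c (Ordinal N0)).
case: D1 A X hX inj minl hup => [|[|D1']] A X hX inj minl hup.
- by move: hX; rewrite flatmx0 eqxx.
- exists (fun i => A i 0 0) => c.
  by rewrite /ti_mps prod11 mxtrace_scalar.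
- exfalso.
  have [S hS] := @combo R d'.+1 D1'.+2 N A LI LI0 ord0 (Ordinal N0) ord0
                  [ffun=> ord0] D inj minl isT hLN hDpow.
  by have := hup S; rewrite leqNgt hS.
Qed.
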